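(* Let $b\in\mathbb{R}$ and let $\mathbf{y}(t),\mathbf{x}(t),\mathbf{z}(t)$ be differentiable curves in $\mathbb{R}^3$; set $\mathbf{b}=(0,0,b)^T$. For $\xi=(\xi^1,\xi^2,\xi^3)^T\in\mathbb{R}^3$ let $\hat\xi=\sum_{\alpha=1}^3\xi^\alpha\sigma^\alpha$, where $\sigma^1=\tfrac12\begin{pmatrix}0&\mathrm{i}\\ \mathrm{i}&0\end{pmatrix}$, $\sigma^2=\tfrac12\begin{pmatrix}0&1\\-1&0\end{pmatrix}$, $\sigma^3=\tfrac12\begin{pmatrix}\mathrm{i}&0\\0&-\mathrm{i}\end{pmatrix}$, and put $\mathcal{B}=\hat{\mathbf b}$, $\mathcal{Y}=\hat{\mathbf y}$, $\mathcal{X}=\hat{\mathbf x}$, $\mathcal{Z}=\hat{\mathbf z}$, $$\mathcal{L}(\lambda)=\mathcal{B}+\frac{\mathcal{Y}}{\lambda}+\frac{\mathcal{X}}{\lambda^2}+\frac{\mathcal{Z}}{\lambda^3},\qquad \mathcal{M}(\lambda)=\frac{\mathcal{X}}{\lambda}+\frac{\mathcal{Z}}{\lambda^2}.$$ Then the system $$\dot{\mathbf y}=\mathbf b\wedge\mathbf x,\qquad \dot{\mathbf x}=\mathbf y\wedge\mathbf x+\mathbf b\wedge\mathbf z,\qquad \dot{\mathbf z}=\mathbf y\wedge\mathbf z$$ holds if and only if $\frac{d}{dt}\mathcal{L}(\lambda)=[\mathcal{M}(\lambda),\mathcal{L}(\lambda)]$ for all $\lambda\in\mathbb{C}\setmi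nus\{0\}$.
   Context: $\wedge$ is the vector (cross) product on $\mathbb{R}^3$ and $[\cdot,\cdot]$ the matrix commutator. (This system is the Hamiltonian flow of $\tfrac12\langle\mathbf y,\mathbf y\rangle+\langle\mathbf b,\mathbf x\rangle$ for the Lie–Poisson brackets $\{y^\alpha,y^\beta\}=\epsilon^{\alpha\beta\gamma}y^\gamma$, $\{y^\alpha,x^\beta\}=\epsilon^{\alpha\beta\gamma}x^\gamma$, $\{y^\alpha,z^\beta\}=\epsilon^{\alpha\beta\gamma}z^\gamma$, $\{x^\alpha,x^\beta\}=\epsilon^{\alpha\beta\gamma}z^\gamma$, all other brackets zero.) *)

(* Defs.v *)
From HB Require Import structures.
From mathcomp Require Import all_boot all_order all_algebra.
From mathcomp Require Import all_classical all_reals.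
From mathcomp Require Import topology normedtype derive.
From mathcomp Require Import complex.
Set Implicit Arguments. Unset Strict Implicit. Unset Printing Implicit Defensive.
Import Order.TTheory GRing.Theory Num.Theory.
Import numFieldNormedType.Exports.
Local Open Scope ring_scope.
Local Open Scope complex_scope.

Section Defs.
Variable R : realType.

Definition comp3 (u : 'rV[R]_3) (k : nat) : R := u 0 (inord k).

Definition vec3 (a1 a2 a3 : R) : 'rV[R]_3 :=
  \row_(k < 3) (match val k with 0 => a1 | 1 => a2 | _ => a3 end).

Definition cross (u v : 'rV[R]_3) : 'rV[R]_3 :=
  vec3 (comp3 u 1 * comp3 v 2 - comp3 u 2 * comp3 v 1)
       (comp3 u 2 * comp3 v 0 - comp3 u 0 * comp3 v 2)
       (comp3 u 0 * comp3 v 1 - comp3 u 1 * comp3 v 0).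

(* the matrices sigma^1, sigma^2, sigma^3 (index alpha = 0,1,2) *)
Definition sigma (alpha : 'I_3) : 'M[R[i]]_2 :=
  \matrix_(r < 2, c < 2)
   ((2^-1)%:C *
    match val alpha, val r, val c with
    | 0, 0, 1 => 'i  | 0, 1, 0 => 'i
    | 1, 0, 1 => 1   | 1, 1, 0 => -1
    | 2, 0, 0 => 'i  | 2, 1, 1 => - 'i
    | _, _, _ => 0
    end).

Definition hat (xi : 'rV[R]_3) : 'M[R[i]]_2 :=
  \sum_(alpha < 3) (xi 0 alpha)%:C *: sigma alpha.

Definition commutator (A B : 'M[R[i]]_2) : 'M[R[i]]_2 := A *m B - B *m A.

Definition mxderiv (F : R -> 'M[R[i]]_2) (t : R) : 'M[R[i]]_2 :=
  \matrix_(r < 2, c < 2)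
    Complex (@derive1 R R^o (fun s : R => complex.Re (F s r c)) t)
            (@derive1 R R^o (fun s : R => complex.Im (F s r c)) t).

Definition bvec (b : R) : 'rV[R]_3 := vec3 0 0 b.

Definition Lmat (b : R) (y x z : R -> 'rV[R]_3) (lam : R[i]) (t : R) : 'M[R[i]]_2 :=
  hat (bvec b) + lam^-1 *: hat (y t) + (lam ^+ 2)^-1 *: hat (x t)
  + (lam ^+ 3)^-1 *: hat (z t).

Definition Mmat (x z : R -> 'rV[R]_3) (lam : R[i]) (t : R) : 'M[R[i]]_2 :=
  lam^-1 *: hat (x t) + (lam ^+ 2)^-1 *: hat (z t).

End Defs.

(* Main.v *)
Require Import Defs.
From HB Require Import structures.
From mathcomp Require Import all_boot all_order all_algebra.
From mathcomp Require Import all_classical all_reals.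
From mathcomp Require Import topology normedtype derive.
From mathcomp Require Import complex.
From mathcomp Require Import ring lra.
Import Order.TTheory GRing.Theory Num.Theory.
Import numFieldNormedType.Exports.
Local Open Scope ring_scope.

Local Notation Re := complex.Re.
Local Notation Im := complex.Im.
Section S.
Local Open Scope complex_scope.
Set Implicit Arguments.

Variable R : realType.
Implicit Types (u v w : 'rV[R]_3) (p q : R[i]).

Lemma ReD p q : Re (p + q) = Re p + Re q. Proof. by case: p => ? ?; case: q => ? ?; reflexivity. Qed.
Lemma ImD p q : Im (p + q) = Im p + Im q. Proof. by case: p => ? ?; case: q => ? ?; reflexivity. Qed.
Lemma ReN p : Re (- p) = - Re p. Proof. by case: p => ? ?; reflexivity. Qed.
Lemma ImN p : Im (- p) = - Im p. Proof. by case: p => ? ?; reflexivity. Qed.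
Lemma ReM p q : Re (p * q) = Re p * Re q - Im p * Im q. Proof. by case: p => ? ?; case: q => ? ?; reflexivity. Qed.
Lemma ImM p q : Im (p * q) = Re p * Im q + Im p * Re q. Proof. by case: p => ? ?; case: q => ? ?; reflexivity. Qed.
Lemma ReC (k : R) : Re (k%:C) = k. Proof. by []. Qed.
Lemma ImC (k : R) : Im (k%:C) = 0. Proof. by []. Qed.
Lemma Rei : Re ('i : R[i]) = 0. Proof. by []. Qed.
Lemma Imi : Im ('i : R[i]) = 1. Proof. by []. Qed.
Lemma Re0 : Re (0 : R[i]) = 0. Proof. by []. Qed.
Lemma Im0 : Im (0 : R[i]) = 0. Proof. by []. Qed.
Lemma Re1 : Re (1 : R[i]) = 1. Proof. by []. Qed.
Lemma Im1 : Im (1 : R[i]) = 0. Proof. by []. Qed.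
Lemma cplxE p : p = Re p +i* Im p. Proof. by case: p => ? ?; reflexivity. Qed.

Lemma Re_sum n (F : 'I_n -> R[i]) : Re (\sum_(k < n) F k) = \sum_(k < n) Re (F k).
Proof. elim/big_ind2: _ => //; by move=> a b c d <- <-; rewrite ReD. Qed.
Lemma Im_sum n (F : 'I_n -> R[i]) : Im (\sum_(k < n) F k) = \sum_(k < n) Im (F k).
Proof. elim/big_ind2: _ => //; by move=> a b c d <- <-; rewrite ImD. Qed.

Lemma Re_hat p u r c :
  Re (p * hat u r c) = \sum_(k < 3) u 0 k * Re (p * sigma R k r c).
Proof.
rewrite /hat summxE mulr_sumr Re_sum; apply: eq_bigr => k _.
by rewrite mxE mulrCA !ReM ReC ImC; ring.
Qed.
Lemma Im_hat p u r c :
  Im (p * hat u r c) = \sum_(k < 3) u 0 k * Im (p * sigma R k r c).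
Proof.
rewrite /hat summxE mulr_sumr Im_sum; apply: eq_bigr => k _.
by rewrite mxE mulrCA !ImM ReC ImC; ring.
Qed.

Lemma comp_is_derive (w : R -> 'rV[R]_3) t k :
  derivable w t 1 ->
  is_derive t 1 (fun s => w s 0 k : R^o) (derive1 w t 0 k).
Proof.
move=> hw; rewrite derive1E derive_mx // mxE.
apply: derivableP. by move/derivable_mxP: hw => /(_ 0 k).
Qed.

Lemma lin3_is_derive (w : R -> 'rV[R]_3) t (a : 'I_3 -> R) :
  derivable w t 1 ->
  is_derive t 1 (fun s => \sum_(k < 3) a k * w s 0 k : R^o)
     (\sum_(k < 3) a k * derive1 w t 0 k).
Proof.
move=> hw.
have -> : (fun s => \sum_(k < 3) a k * w s 0 k : R^o) =
     \sum_(k < 3) (a k \*: (fun s => w s 0 k : R^o)).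
  by rewrite fct_sumE; apply: funext => s; apply: eq_bigr => k _.
apply: is_derive_sum => k.
exact: is_deriveZ (comp_is_derive k hw).
Qed.

Lemma Re_hat_is_derive p (w : R -> 'rV[R]_3) t r c :
  derivable w t 1 ->
  is_derive t 1 (fun s => Re (p * hat (w s) r c) : R^o) (Re (p * hat (derive1 w t) r c)).
Proof.
move=> hw.
have -> : (fun s => Re (p * hat (w s) r c) : R^o) =
   (fun s => \sum_(k < 3) (Re (p * sigma R k r c)) * (w s 0 k)).
  by apply: funext => s; rewrite Re_hat; apply: eq_bigr => k _; rewrite mulrC.
rewrite Re_hat.
have -> : \sum_(k < 3) derive1 w t 0 k * Re (p * sigma R k r c) =
   \sum_(k < 3) Re (p * sigma R k r c) * derive1 w t 0 k.
  by apply: eq_bigr => k _; rewrite mulrC.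
exact: lin3_is_derive.
Qed.

Lemma Im_hat_is_derive p (w : R -> 'rV[R]_3) t r c :
  derivable w t 1 ->
  is_derive t 1 (fun s => Im (p * hat (w s) r c) : R^o) (Im (p * hat (derive1 w t) r c)).
Proof.
move=> hw.
have -> : (fun s => Im (p * hat (w s) r c) : R^o) =
   (fun s => \sum_(k < 3) (Im (p * sigma R k r c)) * (w s 0 k)).
  by apply: funext => s; rewrite Im_hat; apply: eq_bigr => k _; rewrite mulrC.
rewrite Im_hat.
have -> : \sum_(k < 3) derive1 w t 0 k * Im (p * sigma R k r c) =
   \sum_(k < 3) Im (p * sigma R k r c) * derive1 w t 0 k.
  by apply: eq_bigr => k _; rewrite mulrC.
exact: lin3_is_derive.
Qed.
Lemma entry3 (p1 p2 p3 : R[i]) (A B C : 'M[R[i]]_2) r c :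
  (p1 *: A + p2 *: B + p3 *: C) r c = p1 * A r c + p2 * B r c + p3 * C r c.
Proof. by rewrite !mxE. Qed.

Lemma mxderivL b (y x z : R -> 'rV[R]_3) lam t :
  derivable y t 1 -> derivable x t 1 -> derivable z t 1 ->
  mxderiv (Lmat b y x z lam) t =
  lam^-1 *: hat (derive1 y t) + lam^-1 ^+ 2 *: hat (derive1 x t)
  + lam^-1 ^+ 3 *: hat (derive1 z t).
Proof.
move=> hy hx hz; apply/matrixP => r c.
apply/eqP; rewrite eq_complex; apply/andP; split; apply/eqP; rewrite mxE /=.

- have E : (fun s => Re (Lmat b y x z lam s r c) : R^o) =
    (cst (Re (hat (bvec b) r c)) + (fun s => Re (lam^-1 * hat (y s) r c) : R^o))
    + (fun s => Re (lam^-1 ^+ 2 * hat (x s) r c) : R^o)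
    + (fun s => Re (lam^-1 ^+ 3 * hat (z s) r c) : R^o).
    by apply: funext => s; rewrite /Lmat !mxE !ReD -!exprVn.
  rewrite E derive1E.
  have H := is_deriveD (is_deriveD (is_deriveD (is_derive_cst (Re (hat (bvec b) r c) : R^o) t 1)
     (Re_hat_is_derive (lam^-1) r c hy)) (Re_hat_is_derive (lam^-1 ^+ 2) r c hx))
     (Re_hat_is_derive (lam^-1 ^+ 3) r c hz).
  case: H => _ ->.
  by rewrite entry3 !ReD add0r.
- have E : (fun s => Im (Lmat b y x z lam s r c) : R^o) =
    (cst (Im (hat (bvec b) r c)) + (fun s => Im (lam^-1 * hat (y s) r c) : R^o))
    + (fun s => Im (lam^-1 ^+ 2 * hat (x s) r c) : R^o)
    + (fun s => Im (lam^-1 ^+ 3 * hat (z s) r c) : R^o).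
    by apply: funext => s; rewrite /Lmat !mxE !ImD -!exprVn.
  rewrite E derive1E.
  have H := is_deriveD (is_deriveD (is_deriveD (is_derive_cst (Im (hat (bvec b) r c) : R^o) t 1)
     (Im_hat_is_derive (lam^-1) r c hy)) (Im_hat_is_derive (lam^-1 ^+ 2) r c hx))
     (Im_hat_is_derive (lam^-1 ^+ 3) r c hz).
  case: H => _ ->.
  by rewrite entry3 !ImD add0r.
Qed.

Lemma ord2 (r : 'I_2) : r = ord0 \/ r = ord_max.
Proof. case: r => [[|[|//]] Hr]; [left|right]; exact: val_inj. Qed.

Lemma entryD (A B : 'M[R[i]]_2) r c : (A + B) r c = A r c + B r c.
Proof. by rewrite mxE. Qed.
Lemma entryB (A B : 'M[R[i]]_2) r c : (A - B) r c = A r c - B r c.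
Proof. by rewrite !mxE. Qed.
Lemma entryZ (a : R[i]) (A : 'M[R[i]]_2) r c : (a *: A) r c = a * A r c.
Proof. by rewrite mxE. Qed.
Lemma entryM (A B : 'M[R[i]]_2) r c :
  (A *m B) r c = A r ord0 * B ord0 c + A r ord_max * B ord_max c.
Proof.
rewrite mxE !big_ord_recr big_ord0 /= add0r.
by have -> : widen_ord (leqnSn 1) ord_max = ord0 :> 'I_2 by apply: val_inj.
Qed.

Lemma i0 : (inord 0 : 'I_3) = widen_ord (leqnSn 2) (widen_ord (leqnSn 1) ord_max).
Proof. by apply: val_inj; rewrite /= inordK. Qed.
Lemma i1 : (inord 1 : 'I_3) = widen_ord (leqnSn 2) ord_max.
Proof. by apply: val_inj; rewrite /= inordK. Qed.
Lemma i2 : (inord 2 : 'I_3) = ord_max.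
Proof. by apply: val_inj; rewrite /= inordK. Qed.

Ltac hatt := rewrite /hat /comp3 ?i0 ?i1 ?i2 summxE !big_ord_recr big_ord0 /= !mxE /=; ring.

Lemma hat00 u : hat u ord0 ord0 = (2^-1)%:C * ((comp3 u 2)%:C * 'i).
Proof. hatt. Qed.
Lemma hat01 u : hat u ord0 ord_max = (2^-1)%:C * ((comp3 u 0)%:C * 'i + (comp3 u 1)%:C).
Proof. hatt. Qed.
Lemma hat10 u : hat u ord_max ord0 = (2^-1)%:C * ((comp3 u 0)%:C * 'i - (comp3 u 1)%:C).
Proof. hatt. Qed.
Lemma hat11 u : hat u ord_max ord_max = (2^-1)%:C * (- ((comp3 u 2)%:C * 'i)).
Proof. hatt. Qed.

Lemma comp3_cross0 u v : comp3 (cross u v) 0 = comp3 u 1 * comp3 v 2 - comp3 u 2 * comp3 v 1.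
Proof. by rewrite /cross /vec3 {1}/comp3 mxE ?i0 ?i1 ?i2. Qed.
Lemma comp3_cross1 u v : comp3 (cross u v) 1 = comp3 u 2 * comp3 v 0 - comp3 u 0 * comp3 v 2.
Proof. by rewrite /cross /vec3 {1}/comp3 mxE ?i0 ?i1 ?i2. Qed.
Lemma comp3_cross2 u v : comp3 (cross u v) 2 = comp3 u 0 * comp3 v 1 - comp3 u 1 * comp3 v 0.
Proof. by rewrite /cross /vec3 {1}/comp3 mxE ?i0 ?i1 ?i2. Qed.
Lemma comp3D u v k : comp3 (u + v) k = comp3 u k + comp3 v k.
Proof. by rewrite /comp3 mxE. Qed.
Lemma comp3b0 (b : R) : comp3 (bvec b) 0 = 0.
Proof. by rewrite /bvec /vec3 /comp3 mxE ?i0 ?i1 ?i2. Qed.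
Lemma comp3b1 (b : R) : comp3 (bvec b) 1 = 0.
Proof. by rewrite /bvec /vec3 /comp3 mxE ?i0 ?i1 ?i2. Qed.
Lemma comp3b2 (b : R) : comp3 (bvec b) 2 = b.
Proof. by rewrite /bvec /vec3 /comp3 mxE ?i0 ?i1 ?i2. Qed.


Lemma ReCx (a c : R) : Re (a +i* c) = a. Proof. by []. Qed.
Lemma ImCx (a c : R) : Im (a +i* c) = c. Proof. by []. Qed.

Lemma entryN (A : 'M[R[i]]_2) r c : (- A) r c = - A r c.
Proof. by rewrite mxE. Qed.

Lemma mulCx (a b c d : R) : (a +i* b) * (c +i* d) = (a*c - b*d) +i* (a*d + b*c).
Proof. reflexivity. Qed.
Lemma addCx (a b c d : R) : (a +i* b) + (c +i* d) = (a + c) +i* (b + d).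
Proof. reflexivity. Qed.
Lemma oppCx (a b : R) : - (a +i* b) = (- a) +i* (- b).
Proof. reflexivity. Qed.

Lemma zfix : Algebra.hasZero.zero (Algebra.BaseAddUMagma.class R) = 0 :> R.
Proof. by []. Qed.

Ltac cx := apply/eqP; rewrite eq_complex; apply/andP; split; apply/eqP;
  rewrite !(ReD, ImD, ReM, ImM, ReN, ImN, ReC, ImC, Rei, Imi, ReCx, ImCx) ?zfix; ring.

Lemma hat00r u : hat u ord0 ord0 = 0 +i* (2^-1 * comp3 u 2).
Proof. rewrite hat00 /real_complex_def !(mulCx, addCx, oppCx); congr (_ +i* _); ring. Qed.
Lemma hat01r u : hat u ord0 ord_max = (2^-1 * comp3 u 1) +i* (2^-1 * comp3 u 0).
Proof. rewrite hat01 /real_complex_def !(mulCx, addCx, oppCx); congr (_ +i* _); ring. Qed.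
Lemma hat10r u : hat u ord_max ord0 = (- (2^-1 * comp3 u 1)) +i* (2^-1 * comp3 u 0).
Proof. rewrite hat10 /real_complex_def !(mulCx, addCx, oppCx); congr (_ +i* _); ring. Qed.
Lemma hat11r u : hat u ord_max ord_max = 0 +i* (- (2^-1 * comp3 u 2)).
Proof. rewrite hat11 /real_complex_def !(mulCx, addCx, oppCx); congr (_ +i* _); ring. Qed.

Lemma comm_hat u v : commutator (hat u) (hat v) = - hat (cross u v).
Proof.
apply/matrixP => r c; rewrite /commutator entryB !entryM entryN.
by case: (ord2 r) => ->; case: (ord2 c) => ->;
  rewrite ?hat00r ?hat01r ?hat10r ?hat11r ?comp3_cross0 ?comp3_cross1 ?comp3_cross2
    !(mulCx, addCx, oppCx); rewrite ?zfix; congr (_ +i* _); field.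
Qed.

Lemma commDl (A B C : 'M[R[i]]_2) : commutator (A + B) C = commutator A C + commutator B C.
Proof. by rewrite /commutator mulmxDl mulmxDr opprD addrACA. Qed.
Lemma commDr (A B C : 'M[R[i]]_2) : commutator A (B + C) = commutator A B + commutator A C.
Proof. by rewrite /commutator mulmxDl mulmxDr opprD addrACA. Qed.
Lemma commZl a (A B : 'M[R[i]]_2) : commutator (a *: A) B = a *: commutator A B.
Proof. by rewrite /commutator -scalemxAl -scalemxAr -scalerBr. Qed.
Lemma commZr a (A B : 'M[R[i]]_2) : commutator A (a *: B) = a *: commutator A B.
Proof. by rewrite /commutator -scalemxAl -scalemxAr -scalerBr. Qed.

Lemma crossC u v : cross u v = - cross v u.
Proof.
apply/matrixP => i j; rewrite /cross /vec3 !mxE.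
by case: j => [[|[|[|//]]] Hj] /=; ring.
Qed.
Lemma cross_self u : cross u u = 0.
Proof.
apply/matrixP => i j; rewrite /cross /vec3 !mxE.
by case: j => [[|[|[|//]]] Hj] /=; ring.
Qed.
Lemma hatD u v : hat (u + v) = hat u + hat v.
Proof.
rewrite /hat -big_split; apply: eq_bigr => k _ /=.
by rewrite mxE rmorphD scalerDl.
Qed.
Lemma hatN u : hat (- u) = - hat u.
Proof.
rewrite /hat -sumrN; apply: eq_bigr => k _ /=.
by rewrite mxE rmorphN scaleNr.
Qed.
Lemma hat0 : hat (0 : 'rV[R]_3) = 0.
Proof.
rewrite /hat big1 // => k _.
by rewrite mxE rmorph0 scale0r.
Qed.

Lemma commE (b : R) (Y X Z : 'rV[R]_3) (m : R[i]) :
  commutator (m *: hat X + m^+2 *: hat Z)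
    (hat (bvec b) + m *: hat Y + m^+2 *: hat X + m^+3 *: hat Z)
  = m *: hat (cross (bvec b) X) + m^+2 *: hat (cross Y X + cross (bvec b) Z)
    + m^+3 *: hat (cross Y Z).
Proof.
rewrite !commDl !commDr !commZl !commZr !comm_hat.
rewrite (crossC X (bvec b)) (crossC X Y) (crossC Z (bvec b)) (crossC Z Y) (crossC X Z).
rewrite !cross_self hatD !hatN hat0 !opprK.
move: (hat (cross (bvec b) X)) (hat (cross Y X)) (hat (cross (bvec b) Z))
  (hat (cross Y Z)) (hat (cross Z X)) => P Q S T W.
apply/matrixP => r c; rewrite !mxE.
ring.
Qed.

Lemma ReCmul (k a c : R) : Re (k%:C * (a +i* c)) = k * a.
Proof. by rewrite ReM ReC ImC ReCx mul0r subr0. Qed.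
Lemma ImCmul (k a c : R) : Im (k%:C * (a +i* c)) = k * c.
Proof. by rewrite ImM ReC ImC ImCx mul0r addr0. Qed.

Lemma extract m (u1 u2 u3 v1 v2 v3 : 'rV[R]_3) :
  m%:C *: hat u1 + m%:C ^+ 2 *: hat u2 + m%:C ^+ 3 *: hat u3 =
  m%:C *: hat v1 + m%:C ^+ 2 *: hat v2 + m%:C ^+ 3 *: hat v3 ->
  forall k : nat, (k < 3)%N ->
  m * comp3 u1 k + m^+2 * comp3 u2 k + m^+3 * comp3 u3 k =
  m * comp3 v1 k + m^+2 * comp3 v2 k + m^+3 * comp3 v3 k.
Proof.
rewrite -!rmorphXn => E.
case=> [|[|[|//]]] _.
- move/(congr1 (fun M : 'M[R[i]]_2 => Im (M ord0 ord_max))): E.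
  rewrite !entry3 !ImD !hat01r !ImCmul. lra.
- move/(congr1 (fun M : 'M[R[i]]_2 => Re (M ord0 ord_max))): E.
  rewrite !entry3 !ReD !hat01r !ReCmul. lra.
- move/(congr1 (fun M : 'M[R[i]]_2 => Im (M ord0 ord0))): E.
  rewrite !entry3 !ImD !hat00r !ImCmul. lra.
Qed.

Lemma vec_eq u v : (forall k : nat, (k < 3)%N -> comp3 u k = comp3 v k) -> u = v.
Proof.
move=> h; apply/matrixP => i j; rewrite (ord1 i).
have := h j (ltn_ord j); by rewrite /comp3 inord_val.
Qed.

Lemma solve3 (a1 a2 a3 b1 b2 b3 : R) :
  (forall m : R, m = 1 \/ m = -1 \/ m = 2 ->
    m * a1 + m^+2 * a2 + m^+3 * a3 = m * b1 + m^+2 * b2 + m^+3 * b3) ->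
  [/\ a1 = b1, a2 = b2 & a3 = b3].
Proof.
move=> h.
have h1 := h 1 (or_introl erefl).
have h2 := h (-1) (or_intror (or_introl erefl)).
have h3 := h 2 (or_intror (or_intror erefl)).
rewrite !expr1n !mul1r in h1.
rewrite !sqrrN !expr1n !exprS !expr0 in h2 h3.
split; nra.
Qed.
End S.

Theorem proposition4 (R : realType) (b : R) (y x z : R -> 'rV[R]_3)
  (hy : forall t : R, derivable y t 1)
  (hx : forall t : R, derivable x t 1)
  (hz : forall t : R, derivable z t 1) :
  ((forall t : R, derive1 y t = cross (bvec b) (x t)) /\
   (forall t : R, derive1 x t = cross (y t) (x t) + cross (bvec b) (z t)) /\
   (forall t : R, derive1 z t = cross (y t) (z t)))
  <->
  (forall lam : R[i], lam != 0 -> forall t : R,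
     mxderiv (Lmat b y x z lam) t = commutator (Mmat x z lam t) (Lmat b y x z lam t)).
Proof.
split.
- case=> Hy [Hx Hz] lam Hl t.
  by rewrite mxderivL // /Mmat /Lmat -!exprVn commE Hy Hx Hz.
- move=> H.
  have E : forall t (m : R), m = 1 \/ m = -1 \/ m = 2 ->
    m%:C%C *: hat (derive1 y t) + m%:C%C ^+ 2 *: hat (derive1 x t) + m%:C%C ^+ 3 *: hat (derive1 z t) =
    m%:C%C *: hat (cross (bvec b) (x t)) + m%:C%C ^+ 2 *: hat (cross (y t) (x t) + cross (bvec b) (z t))
    + m%:C%C ^+ 3 *: hat (cross (y t) (z t)).
    move=> t m hm.
    have hm0 : m != 0.
      case: hm => [->|[->|->]]; by rewrite ?oppr_eq0 ?oner_eq0 ?pnatr_eq0.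
    have hl : (m^-1)%:C%C != 0.
      apply/negP; rewrite eq_complex /= => /andP [h _]; move: h.
      by rewrite invr_eq0 (negbTE hm0).
    have := H _ hl t.
    by rewrite mxderivL // /Mmat /Lmat -!exprVn commE -fmorphV invrK.
  have S t k (hk : (k < 3)%N) := @solve3 R _ _ _ _ _ _ (fun m hm => @extract R m _ _ _ _ _ _ (E t m hm) k hk).
  split; [|split] => t; apply: vec_eq => k hk; by case: (S t k hk).
Qed.
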